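(* Let $1,2,3,4$ be four distinct vertices of $G$ such that $G[\{1,2,3\}]$ has edge set exactly $\{12,13,23\}$, $G[\{2,3,4\}]$ has edge set exactly $\{23,24,34\}$, and $w_{12}\ge\max\{w_{13},w_{23}\}$ (nothing is assumed about whether $14$ is an edge). If $\Gamma_G$ is population monotonic, then $w_{24}\ge w_{23}+w_{34}$.
   Context: $G=(V,E;w)$ is a finite simple graph with edge weights $w:E\to\mathbb{R}$, $w_e>0$ for all $e\in E$; $w_{ij}$ denotes the weight of edge $ij$. The matching game on $G$ is the cooperative game $\Gamma_G=(N,\gamma)$ with player set $N=V$ and, for $S\subseteq N$, $\gamma(S)$ equal to the maximum weight of a matching in the induced subgraph $G[S]$ (so $\gamma(\emptyset)=0$). A population monotonic allocation scheme (PMAS) is a family $(\boldsymbol{x}_S)_{\emptyset\neq S\subseteq N}$ with $\boldsymbol{x}_S=(x_{S,i})_{i\in S}\in\mathbb{R}^S$ such that (efficiency) $\sum_{i\in S}x_{S,i}=\gamma(S)$ for every nonempty $S\subseteq N$, and (monotonicity) $x_{S,i}\le x_{T,i}$ whenever $\emptyset\ne S\subseteq T\subseteq N$ and $i\in S$. $\Gamma_G$ is called population monotonic if it admits a PMAS. *)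

(* Defs.v *)
From mathcomp Require Import all_boot all_order all_algebra.
Set Implicit Arguments. Unset Strict Implicit. Unset Printing Implicit Defensive.
Import Order.TTheory GRing.Theory Num.Theory.
Local Open Scope ring_scope.

Definition simple_graph (T : finType) (e : rel T) : Prop :=
  (forall u v, e u v = e v u) /\ (forall u, ~~ e u u).

Definition edge_weights (T : finType) (R : realFieldType) (e : rel T)
  (w : T -> T -> R) : Prop :=
  (forall u v, w u v = w v u) /\ (forall u v, e u v -> 0 < w u v).

(* A matching of the induced subgraph G[S], represented as a set of oriented
   edges (u,v); distinct members share no endpoint (so each edge occurs in
   at most one orientation). *)
Definition is_matching (T : finType) (e : rel T) (S : {set T})
  (M : {set T * T}) : bool :=
  [forall p in M, [&& e p.1 p.2, p.1 \in S & p.2 \in S]] &&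
  [forall p in M, forall q in M,
     (p != q) ==> [&& p.1 != q.1, p.1 != q.2, p.2 != q.1 & p.2 != q.2]].

Definition matching_weight (T : finType) (R : realFieldType)
  (w : T -> T -> R) (M : {set T * T}) : R :=
  \sum_(p in M) w p.1 p.2.

(* gamma(S) = maximum weight of a matching of G[S]
   (the empty matching has weight 0 and all weights are nonnegative,
   so taking the max with base value 0 is exact). *)
Definition gamma (T : finType) (R : realFieldType) (e : rel T)
  (w : T -> T -> R) (S : {set T}) : R :=
  \big[Order.max/0]_(M : {set T * T} | is_matching e S M) matching_weight w M.

(* Population monotonic allocation scheme: x S i is the payoff of player i
   in coalition S (only meaningful for i \in S, S nonempty). *)
Definition is_PMAS (T : finType) (R : realFieldType) (e : rel T)
  (w : T -> T -> R) (x : {set T} -> T -> R) : Prop :=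
  (forall S : {set T}, S != set0 -> \sum_(i in S) x S i = gamma e w S) /\
  (forall (S U : {set T}) (i : T), S != set0 -> S \subset U -> i \in S ->
     x S i <= x U i).

Definition population_monotonic (T : finType) (R : realFieldType) (e : rel T)
  (w : T -> T -> R) : Prop :=
  exists x : {set T} -> T -> R, is_PMAS e w x.

(* Main.v *)
Require Import Defs.
From mathcomp Require Import all_boot all_order all_algebra.
From mathcomp Require Import lra.
Import Order.TTheory GRing.Theory Num.Theory.
Local Open Scope ring_scope.

Lemma no4 (T : finType) (a b c x1 x2 x3 x4 : T) :
  x1 \in a |: (b |: [set c]) -> x2 \in a |: (b |: [set c]) ->
  x3 \in a |: (b |: [set c]) -> x4 \in a |: (b |: [set c]) ->
  ~~ [&& x1 != x2, x1 != x3, x1 != x4, x2 != x3, x2 != x4 & x3 != x4].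
Proof.
rewrite !inE => /or3P[]/eqP-> /or3P[]/eqP-> /or3P[]/eqP-> /or3P[]/eqP->;
  by rewrite ?eqxx ?andbF.
Qed.

Lemma gamma_ge (R : realFieldType) (T : finType) (e : rel T) (w : T -> T -> R)
  (S : {set T}) i j : e i j -> i \in S -> j \in S -> w i j <= gamma e w S.
Proof.
move=> eij iS jS.
have HM : is_matching e S [set (i, j)].
  apply/andP; split; apply/forallP => p; apply/implyP; rewrite inE => /eqP ->.
    by rewrite /= eij iS jS.
  by apply/forallP => q; apply/implyP; rewrite inE => /eqP ->; rewrite eqxx.
have := le_bigmax_cond 0 (matching_weight w) HM.
by rewrite /matching_weight big_set1.
Qed.

Lemma gamma_le3 (R : realFieldType) (T : finType) (e : rel T) (w : T -> T -> R)
  (a b c : T) (m : R) : simple_graph e -> 0 <= m ->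
  (forall u v, u \in a |: (b |: [set c]) -> v \in a |: (b |: [set c]) ->
     u != v -> w u v <= m) ->
  gamma e w (a |: (b |: [set c])) <= m.
Proof.
move=> [_ irr] m0 Hw.
apply: (big_ind (fun y => y <= m)) => //.
  by move=> x y hx hy; rewrite ge_max hx hy.
move=> M /andP[/forallP H1 /forallP H2].
have ne p : p \in M -> p.1 != p.2.
  move=> pM; move: (H1 p); rewrite pM /= => /andP[ep _].
  by apply/eqP => E; move: (irr p.1); rewrite {2}E ep.
have mem p : p \in M -> (p.1 \in a |: (b |: [set c])) && (p.2 \in a |: (b |: [set c])).
  by move=> pM; move: (H1 p); rewrite pM /= => /andP[_ ->].
have [->|/set0Pn [p pM]] := eqVneq M set0.
  by rewrite /matching_weight big_set0.
have -> : M = [set p].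
  apply/setP => q; rewrite inE; apply/idP/eqP => [qM|->//].
  apply/eqP; apply: contraT => nq.
  move: (H2 q); rewrite qM /= => /forallP /(_ p); rewrite pM nq /=.
  case/and4P => h1 h2 h3 h4.
  case/andP: (mem q qM) => q1 q2; case/andP: (mem p pM) => p1 p2.
  by move: (@no4 _ a b c _ _ _ _ q1 q2 p1 p2); rewrite (ne q qM) (ne p pM) h1 h2 h3 h4.
rewrite /matching_weight big_set1.
by case/andP: (mem p pM) => p1 p2; apply: Hw => //; apply: ne.
Qed.

Lemma sum2 (R : realFieldType) (T : finType) (x : T -> R) i j : i != j ->
  \sum_(k in i |: [set j]) x k = x i + x j.
Proof. move=> nij; rewrite big_setU1 /=; first by rewrite big_set1.
by rewrite inE. Qed.

Lemma sum3 (R : realFieldType) (T : finType) (x : T -> R) i j k :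
  i != j -> i != k -> j != k ->
  \sum_(l in i |: (j |: [set k])) x l = x i + (x j + x k).
Proof.
move=> nij nik njk; rewrite big_setU1 ?sum2 // !inE negb_or nij.
by rewrite nik.
Qed.

Lemma arith (R : realFieldType) (a c d f m x12_1 x12_2 x123_1 x123_2 x123_3 x23_2 x23_3 x34_3 x34_4 y2 y3 y4 : R) :
  x12_1 <= x123_1 -> x12_2 <= x123_2 -> x23_3 <= x123_3 ->
  x23_2 <= y2 -> x34_3 <= y3 -> x34_4 <= y4 ->
  a <= x12_1 + x12_2 -> c <= x23_2 + x23_3 -> f <= x34_3 + x34_4 ->
  x123_1 + (x123_2 + x123_3) <= a -> y2 + (y3 + y4) <= m ->
  (c + f <= m -> c + f <= d) -> c + f <= d.
Proof. move=> h1 h2 h3 h4 h5 h6 h7 h8 h9 h10 h11; apply; lra. Qed.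

Lemma fin (R : realFieldType) (c d f : R) : 0 < c -> 0 < f ->
  c + f <= Num.max c (Num.max d f) -> c + f <= d.
Proof. move=> hc hf; rewrite !le_max => /or3P[] h; lra. Qed.

Theorem mainTheorem4 (R : realFieldType) (T : finType) (e : rel T)
  (w : T -> T -> R) (v1 v2 v3 v4 : T) :
  simple_graph e -> edge_weights e w ->
  uniq [:: v1; v2; v3; v4] ->
  e v1 v2 -> e v1 v3 -> e v2 v3 -> e v2 v4 -> e v3 v4 ->
  Num.max (w v1 v3) (w v2 v3) <= w v1 v2 ->
  population_monotonic e w ->
  w v2 v3 + w v3 v4 <= w v2 v4.
Proof.
move=> sg [wsym wpos] U e12 e13 e23 e24 e34 hmax [x [eff mono]].
move: U; rewrite /= !inE !negb_or => /and4P[/and3P[n12 n13 n14] /andP[n23 n24] n34 _].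
move: hmax; rewrite ge_max => /andP[h13 h23].
have p23 := wpos _ _ e23; have p34 := wpos _ _ e34; have p12 := wpos _ _ e12.
have ne2 (i j : T) : i |: [set j] != set0.
  by apply/set0Pn; exists i; rewrite !inE eqxx.
have ne3 (i j k : T) : i |: (j |: [set k]) != set0.
  by apply/set0Pn; exists i; rewrite !inE eqxx.
set S123 := v1 |: (v2 |: [set v3]).
set S234 := v2 |: (v3 |: [set v4]).
have g12 : w v1 v2 <= x [set v1; v2] v1 + x [set v1; v2] v2.
  rewrite -sum2 // eff //; apply: gamma_ge => //; rewrite !inE eqxx ?orbT //.
have g23 : w v2 v3 <= x [set v2; v3] v2 + x [set v2; v3] v3.
  rewrite -sum2 // eff //; apply: gamma_ge => //; rewrite !inE eqxx ?orbT //.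
have g34 : w v3 v4 <= x [set v3; v4] v3 + x [set v3; v4] v4.
  rewrite -sum2 // eff //; apply: gamma_ge => //; rewrite !inE eqxx ?orbT //.
have g123 : x S123 v1 + (x S123 v2 + x S123 v3) <= w v1 v2.
  rewrite -sum3 // eff //; apply: gamma_le3 => //; first exact: ltW.
  move=> u v; rewrite !inE => /or3P[]/eqP-> /or3P[]/eqP->; rewrite ?eqxx // => _;
    rewrite ?h13 ?h23 ?lexx // wsym ?h13 ?h23 ?lexx //.
set m := Num.max (w v2 v3) (Num.max (w v2 v4) (w v3 v4)).
have m1 : w v2 v3 <= m by rewrite le_max lexx.
have m2 : w v2 v4 <= m by rewrite le_max le_max lexx orbT.
have m3 : w v3 v4 <= m by rewrite le_max le_max lexx !orbT.
have g234 : x S234 v2 + (x S234 v3 + x S234 v4) <= m.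
  rewrite -sum3 // eff //; apply: gamma_le3 => //; first exact: le_trans (ltW p23) m1.
  move=> u v; rewrite !inE => /or3P[]/eqP-> /or3P[]/eqP->; rewrite ?eqxx // => _;
    rewrite ?m1 ?m2 ?m3 // wsym ?m1 ?m2 ?m3 //.
have sub (S : {set T}) k : S != set0 -> k \in S -> S \subset S123 -> x S k <= x S123 k.
  by move=> *; apply: mono.
have sub' (S : {set T}) k : S != set0 -> k \in S -> S \subset S234 -> x S k <= x S234 k.
  by move=> *; apply: mono.
have s12 : [set v1; v2] \subset S123.
  by apply/subsetP => k; rewrite !inE => /orP[]/eqP->; rewrite eqxx ?orbT.
have s23 : [set v2; v3] \subset S123.
  by apply/subsetP => k; rewrite !inE => /orP[]/eqP->; rewrite eqxx ?orbT.
have s23' : [set v2; v3] \subset S234.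
  by apply/subsetP => k; rewrite !inE => /orP[]/eqP->; rewrite eqxx ?orbT.
have s34 : [set v3; v4] \subset S234.
  by apply/subsetP => k; rewrite !inE => /orP[]/eqP->; rewrite eqxx ?orbT.
have a1 := sub _ v1 (ne2 _ _) (setU11 _ _) s12.
have a2 := sub _ v2 (ne2 _ _) (setU1r _ (set11 _)) s12.
have a3 := sub _ v3 (ne2 _ _) (setU1r _ (set11 _)) s23.
have b2 := sub' _ v2 (ne2 _ _) (setU11 _ _) s23'.
have b3 := sub' _ v3 (ne2 _ _) (setU11 _ _) s34.
have b4 := sub' _ v4 (ne2 _ _) (setU1r _ (set11 _)) s34.
apply: (@arith R (w v1 v2) (w v2 v3) (w v2 v4) (w v3 v4) m _ _ _ _ _ _ _ _ _ _ _ _ a1 a2 a3 b2 b3 b4 g12 g23 g34 g123 g234).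
exact: fin.
Qed.
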